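(* Consider the Kakutani interval splitting process with cutoff $x_c\in(0,1)$: start with $(0,1)$; at each step the current largest subinterval is split into two pieces by a division point uniformly distributed in it (independently of the past); subintervals of length at most $x_c$ are not split further, and the process stops when all subintervals have length at most $x_c$; let $n$ be the total number of splits. Fix $y\in(0,1)$ and let $K$ be the number of splits, during the process, of a subinterval containing the point $y$ (the ''$y$-subintervals'') before the subinterval containing $y$ has length at most $x_c$. Then, with high probability, $K=\sim\!\log n$, i.e. $K$ is at most of order $\log n$ (equivalently of order $\log(1/x_c)$): for every $A>0$ there is a constant $C_A$ such that $K\le C_A\log(1/x_c)$ except on an event of probability at most of order $x_c^{A}$.
   Context: The process ends with $n+1$ subintervals all of length at most $x_c$, and $1/x_c$ is of the same order as $n$ (up to constants), so $\log n$ and $\log(1/x_c)$ are comparable; asymptotics are as $x_c\to0$. *)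

(* Defs.v *)
From HB Require Import structures.
From mathcomp Require Import all_boot all_order all_algebra.
From mathcomp Require Import all_classical all_reals all_analysis.
Set Implicit Arguments. Unset Strict Implicit. Unset Printing Implicit Defensive.
Import Order.TTheory GRing.Theory Num.Theory.
Local Open Scope classical_set_scope.
Local Open Scope ring_scope.

Section Kakutani.
Variable R : realType.

Definition ilen (I : R * R) : R := I.2 - I.1.

(* Index of the largest subinterval of length > xc (the first one among
   ties, which occur with probability 0); None if every subinterval has
   length <= xc, i.e. the process has stopped. *)
Definition largest (xc : R) (s : seq (R * R)) : option nat :=
  foldl (fun (cur : option nat) (i : nat) =>
    if xc < ilen (nth (0,0) s i) then
      match cur with
      | None => Some i
      | Some j => if ilen (nth (0,0) s j) < ilen (nth (0,0) s i)
                  then Some i else Some j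
      end
    else cur) None (iota 0 (size s)).

(* After the stopping time the configuration no longer changes. *)
Definition kstep (xc : R) (s : seq (R * R)) (u : R) : seq (R * R) :=
  match largest xc s with
  | None => s
  | Some i =>
      let I := nth (0,0) s i in
      let c := I.1 + u * (I.2 - I.1) in
      take i s ++ [:: (I.1, c); (c, I.2)] ++ drop i.+1 s
  end.

Definition splits_y (xc y : R) (s : seq (R * R)) : bool :=
  match largest xc s with
  | None => false
  | Some i => let I := nth (0,0) s i in (I.1 < y) && (y < I.2)
  end.

Fixpoint kconfig (xc : R) (u : nat -> R) (n : nat) : seq (R * R) :=
  match n with
  | 0 => [:: (0, 1)]
  | n.+1 => kstep xc (kconfig xc u n) (u n)
  end.

(* Number of splits of y-subintervals among the first N steps.  K itself is
   the (nondecreasing) limit of K_N as N -> oo. *)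
Definition Ky (xc y : R) (u : nat -> R) (N : nat) : nat :=
  \sum_(i < N) splits_y xc y (kconfig xc u i).

Definition mutually_independent {d} {T : measurableType d}
  (P : probability T R) (X : nat -> T -> R) : Prop :=
  forall (s : seq nat) (B : nat -> set R), uniq s ->
    (forall i, i \in s -> measurable (B i)) ->
    P (\big[setI/setT]_(i <- s) (X i @^-1` B i)) =
    (\prod_(i <- s) P (X i @^-1` B i))%E.

Definition uniform01 {d} {T : measurableType d}
  (P : probability T R) (X : T -> R) : Prop :=
  forall B : set R, measurable B -> P (X @^-1` B) = uniform_prob (@ltr01 R) B.

End Kakutani.

(* Main.v *)
Require Import Defs.
From HB Require Import structures.
From mathcomp Require Import all_boot all_order all_algebra.
From mathcomp Require Import all_classical all_reals all_analysis.
From mathcomp Require Import ring lra zify.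
From Stdlib Require Import Lia.
Set Implicit Arguments. Unset Strict Implicit. Unset Printing Implicit Defensive.
Import Order.TTheory GRing.Theory Num.Theory.
Local Open Scope classical_set_scope.
Local Open Scope ring_scope.

Section Det.
Variables (R : realType) (xc y : R) (n : nat) (u : nat -> R).

Definition succb (v : R) : bool := (4^-1 <= v) && (v <= 3/4).
Definition py (J : R * R) : bool := (J.1 < y) && (y < J.2).
Definition beta : R := 3/4.

Fixpoint SF (t : nat) : nat * nat :=
  match t with
  | 0 => (0, 0)%N
  | t.+1 => let p := SF t in
     if splits_y xc y (kconfig xc u t) && (p.1 + p.2 < n)%N then
       (if succb (u t) then (p.1.+1, p.2) else (p.1, p.2.+1)) else p
  end.

Lemma largest_spec (s : seq (R * R)) i : largest xc s = Some i ->
  (i < size s)%N /\ xc < ilen (nth (0,0) s i).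
Proof.
rewrite /largest.
have : forall j, j \in iota 0 (size s) -> (j < size s)%N.
  by move=> j; rewrite mem_iota.
have : forall i, (None : option nat) = Some i -> (i < size s)%N /\ xc < ilen (nth (0,0) s i) by [].
elim: (iota 0 (size s)) (None : option nat) => [|a l IH] cur Hcur Hl //=.
  exact: Hcur.
apply: IH; last by move=> j jl; apply: Hl; rewrite inE jl orbT.
move=> k; case: ifPn => ha; last exact: Hcur.
have as_ : (a < size s)%N by apply: Hl; rewrite inE eqxx.
case: cur Hcur => [j|] Hcur; last by case=> <-.
case: ifPn => _; first by case=> <-.
by case=> <-; apply: Hcur.
Qed.

Lemma SF_sum t : ((SF t).1 + (SF t).2 = minn (Ky xc y u t) n)%N.
Proof.
elim: t => [|t IH] /=; first by rewrite /Ky big_ord0 min0n.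
rewrite /Ky big_ord_recr /= -/(Ky xc y u t).
case: (splits_y xc y (kconfig xc u t)) => /=.
  case: ifPn => h.
    case: ifPn => _ /=; rewrite ?addSn ?addnS IH; move: h; rewrite IH => h;
      apply/eqP; rewrite eqn_leq; apply/andP; split;
      rewrite ?leq_min ?geq_min; lia.
  move: h; rewrite IH => h; apply/eqP; rewrite eqn_leq; apply/andP; split; lia.
by rewrite addn0.
Qed.


Definition Inv t := (forall J, J \in kconfig xc u t -> py J ->
    ilen J <= beta ^+ (SF t).1) /\ (count py (kconfig xc u t) <= 1)%N.

Lemma take_drop_nth (s : seq (R * R)) i : (i < size s)%N ->
  s = take i s ++ nth (0,0) s i :: drop i.+1 s.
Proof. by move=> hi; rewrite -drop_nth // cat_take_drop. Qed.

Lemma Inv_step t : 0 < xc -> 0 <= u t <= 1 -> Inv t -> Inv t.+1.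
Proof.
move=> xc0 /andP[u0 u1] [IH1 IH2].
rewrite /Inv /= /kstep /splits_y.
case E: (largest xc (kconfig xc u t)) => [i|] /=; last by split.
have [isz hI] := largest_spec E.
set s := kconfig xc u t in IH1 IH2 isz hI E *.
set I := nth (0,0) s i in hI *.
have hs := take_drop_nth isz.
have Is : I \in s by apply: mem_nth.
set c := I.1 + u t * (I.2 - I.1).
have L0 : 0 <= ilen I by exact: ltW (lt_trans xc0 hI).
have LB := IH1 _ Is.
rewrite /ilen in L0 hI LB.
case pI: (py I) => /=.
- have LB' := LB pI.
  move: IH2; rewrite {1}hs count_cat /= pI => hc.
  have ct : count py (take i s) = 0%N by lia.
  have cd : count py (drop i.+1 s) = 0%N by lia.
  split; last first.
    rewrite count_cat /= ct cd /py /=.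
    by case: (ltrP I.1 y); case: (ltrP y c); case: (ltrP c y); case: (ltrP y I.2) => //= *; lra.
  move=> J; rewrite mem_cat => /orP[Jt|]; first by move=> pJ; move/eqP: ct; rewrite eqn0Ngt -has_count => /hasP; case; exists J.
  rewrite inE => /orP[/eqP->|]; last rewrite inE => /orP[/eqP->|Jd]; last by move=> pJ; move/eqP: cd; rewrite eqn0Ngt -has_count => /hasP; case; exists J.
  + move=> _; rewrite /ilen /=.
    case: ifPn => _; last by rewrite /c; nra.
    case: ifPn => /= hu; last by rewrite /c; nra.
    move: hu; rewrite /succb => /andP[h1 h2].
    rewrite exprS /beta; have := LB'; have : 0 <= beta ^+ (SF t).1 by rewrite exprn_ge0 // /beta.
    rewrite /beta /c => *; nra.
  + move=> _; rewrite /ilen /=.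
    case: ifPn => _; last by rewrite /c; nra.
    case: ifPn => /= hu; last by rewrite /c; nra.
    move: hu; rewrite /succb => /andP[h1 h2].
    rewrite exprS /beta; have := LB'; have : 0 <= beta ^+ (SF t).1 by rewrite exprn_ge0 // /beta.
    rewrite /beta /c => *; nra.
- have np1 : ~~ py (I.1, c).
    rewrite /py /=; apply/negP => /andP[h1 h2]; move/negbT: pI; rewrite /py negb_and -!leNgt.
    by case/orP => h3; rewrite /c in h2; nra.
  have np2 : ~~ py (c, I.2).
    rewrite /py /=; apply/negP => /andP[h1 h2]; move/negbT: pI; rewrite /py negb_and -!leNgt.
    by case/orP => h3; rewrite /c in h1; nra.
  have -> : (I.1 < y < I.2) = false by exact: pI.
  split; last first.
    move: IH2; rewrite {1}hs !count_cat /= pI (negbTE np1) (negbTE np2) /=.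
    by rewrite !add0n.
  move=> J; rewrite mem_cat => /orP[Jt|].
    by apply: IH1; rewrite hs mem_cat Jt.
  rewrite inE => /orP[/eqP->|]; first by rewrite (negbTE np1).
  rewrite inE => /orP[/eqP->|Jd]; first by rewrite (negbTE np2).
  by apply: IH1; rewrite hs mem_cat inE Jd !orbT.
Qed.

Lemma Inv0 : Inv 0.
Proof.
split => [J|/=]; last by case: (py _).
by rewrite inE => /eqP -> _; rewrite /ilen /= expr0 subr0.
Qed.

Lemma Inv_all t : 0 < xc -> (forall i, (i < t)%N -> 0 <= u i <= 1) -> Inv t.
Proof.
move=> xc0; elim: t => [|t IH] hu; first exact: Inv0.
apply: Inv_step => //; first exact: hu.
by apply: IH => i hi; apply: hu; lia.
Qed.

Lemma Ky_S t : Ky xc y u t.+1 = (Ky xc y u t + splits_y xc y (kconfig xc u t))%N.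
Proof. by rewrite /Ky big_ord_recr. Qed.

Lemma bad_det t : 0 < xc -> (forall i, (i < t)%N -> 0 <= u i <= 1) ->
  (n < Ky xc y u t)%N -> ((SF t).1 + (SF t).2 = n)%N /\ xc < beta ^+ (SF t).1.
Proof.
move=> xc0; elim: t => [|t IH] hu; first by rewrite /Ky big_ord0.
have hu' : forall i, (i < t)%N -> 0 <= u i <= 1 by move=> i hi; apply: hu; lia.
have hS := SF_sum t.
rewrite Ky_S /= => hK.
case: (ltnP n (Ky xc y u t)) => hK'.
  have [h1 h2] := IH hu' hK'.
  by rewrite h1 ltnn andbF.
have hb : splits_y xc y (kconfig xc u t) by move: hK; case: (splits_y _ _ _) => //=; lia.
have hKn : Ky xc y u t = n by move: hK; rewrite hb /=; lia.
have hsum : ((SF t).1 + (SF t).2 = n)%N by rewrite hS hKn minnn.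
rewrite hsum ltnn andbF; split => //.
have [Inv1 _] := Inv_all xc0 hu'.
move: hb; rewrite /splits_y; case E: (largest _ _) => [i|] // pI.
have [isz hI] := largest_spec E.
apply: (lt_le_trans hI); apply: Inv1 => //; exact: mem_nth.
Qed.

End Det.

Section Meas.
Variables (R : realType) (d' : measure_display) (T' : measurableType d').

Definition mfib {X : Type} (f : T' -> X) := forall x, measurable (f @^-1` [set x]).

Lemma comp_enum {X Y : Type} (e : nat -> X) (esurj : forall x, exists k, e k = x)
  (a : T' -> X) (g : X -> T' -> Y) :
  mfib a -> (forall x, mfib (g x)) -> mfib (fun w => g (a w) w).
Proof.
move=> ma mg z.
have -> : (fun w => g (a w) w) @^-1` [set z] =
   \bigcup_k (a @^-1` [set e k] `&` g (e k) @^-1` [set z]).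
  apply/seteqP; split => w /=.
    move=> h; have [k hk] := esurj (a w); exists k => //; split => //=.
    by rewrite hk.
  by case=> k _ [/= h1 h2]; rewrite h1.
by apply: bigcupT_measurable => k; apply: measurableI; [exact: ma|exact: mg].
Qed.

Lemma comp_enum_R {X : Type} (e : nat -> X) (esurj : forall x, exists k, e k = x)
  (a : T' -> X) (g : X -> T' -> R) :
  mfib a -> (forall x, measurable_fun setT (g x)) ->
  measurable_fun setT (fun w => g (a w) w).
Proof.
move=> ma mg; rewrite /measurable_fun => _ B mB; rewrite setTI.
have -> : (fun w => g (a w) w) @^-1` B =
   \bigcup_k (a @^-1` [set e k] `&` g (e k) @^-1` B).
  apply/seteqP; split => w /=.
    move=> h; have [k hk] := esurj (a w); exists k => //; split => //=.
    by rewrite hk.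
  by case=> k _ [/= h1 h2]; rewrite h1.
apply: bigcupT_measurable => k; apply: measurableI; first exact: ma.
by have := mg (e k) measurableT B mB; rewrite setTI.
Qed.

Lemma mfib_cst {X : Type} (x0 : X) : mfib (fun _ => x0).
Proof.
move=> x; have [h|h] := pselect (x0 = x).
  by rewrite (_ : _ @^-1` _ = setT) //; apply/seteqP; split => w //=.
by rewrite (_ : _ @^-1` _ = set0) //; apply/seteqP; split => w //=.
Qed.

Lemma mfib_if {X : Type} (b : T' -> bool) (f1 f2 : T' -> X) :
  measurable [set w | b w] -> mfib f1 -> mfib f2 ->
  mfib (fun w => if b w then f1 w else f2 w).
Proof.
move=> mb m1 m2 x.
have -> : (fun w => if b w then f1 w else f2 w) @^-1` [set x] =
  ([set w | b w] `&` f1 @^-1` [set x]) `|` (~` [set w | b w] `&` f2 @^-1` [set x]).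
  apply/seteqP; split => w /=; first by case: (b w) => h; [left|right].
  by case=> -[]; case: (b w).
by apply: measurableU; apply: measurableI => //; apply: measurableC.
Qed.

Lemma mfib_bool (b : T' -> bool) : measurable [set w | b w] -> mfib b.
Proof.
move=> mb [].
  by rewrite (_ : _ @^-1` _ = [set w | b w]) //; apply/seteqP; split.
rewrite (_ : _ @^-1` _ = ~` [set w | b w]); first exact: measurableC.
by apply/seteqP; split => w /=; case: (b w).
Qed.

Lemma mfib_set (b : T' -> bool) : mfib b -> measurable [set w | b w].
Proof. by move=> h; exact: (h true). Qed.

Lemma mset_lt (f g : T' -> R) : measurable_fun setT f -> measurable_fun setT g ->
  measurable [set w | f w < g w].
Proof.
move=> mf mg; have := measurable_realfun.measurable_fun_ltr mf mg measurableT.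
by move=> /(_ [set true] I); rewrite setTI.
Qed.

Lemma mset_le (f g : T' -> R) : measurable_fun setT f -> measurable_fun setT g ->
  measurable [set w | f w <= g w].
Proof.
move=> mf mg; have := measurable_fun_le measurableT mf mg.
by rewrite setTI.
Qed.

Definition eo (k : nat) : option nat := if k is k'.+1 then Some k' else None.
Lemma eo_surj x : exists k, eo k = x.
Proof. by case: x => [k|]; [exists k.+1|exists 0%N]. Qed.
Lemma id_surj (x : nat) : exists k, id k = x. Proof. by exists x. Qed.
Definition ep (k : nat) : nat * nat := odflt (0,0)%N (unpickle k).
Lemma ep_surj x : exists k, ep k = x.
Proof. by exists (pickle x); rewrite /ep pickleK. Qed.

Lemma mset_and (b1 b2 : T' -> bool) : measurable [set w | b1 w] ->
  measurable [set w | b2 w] -> measurable [set w | b1 w && b2 w].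
Proof.
move=> m1 m2; rewrite (_ : [set w | _] = [set w | b1 w] `&` [set w | b2 w]).
  exact: measurableI.
by apply/seteqP; split => w /=; [move/andP|move=> [-> ->]].
Qed.

Lemma mfun_if (b : T' -> bool) (f1 f2 : T' -> R) :
  measurable [set w | b w] -> measurable_fun setT f1 -> measurable_fun setT f2 ->
  measurable_fun setT (fun w => if b w then f1 w else f2 w).
Proof.
move=> mb m1 m2; rewrite /measurable_fun => _ B mB; rewrite setTI.
have -> : (fun w => if b w then f1 w else f2 w) @^-1` B =
  ([set w | b w] `&` f1 @^-1` B) `|` (~` [set w | b w] `&` f2 @^-1` B).
  apply/seteqP; split => w /=; first by case: (b w) => h; [left|right].
  by case=> -[]; case: (b w).
apply: measurableU; apply: measurableI => //; try exact: measurableC.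
  by have := m1 measurableT B mB; rewrite setTI.
by have := m2 measurableT B mB; rewrite setTI.
Qed.

End Meas.

Section KstepFacts.
Variables (R : realType) (xc : R).

Lemma size_kstep (s : seq (R * R)) uu : size (kstep xc s uu) =
  if largest xc s is Some _ then (size s).+1 else size s.
Proof.
rewrite /kstep; case E: (largest xc s) => [i|] //.
have [isz _] := largest_spec E.
rewrite size_cat size_take isz /= size_drop; lia.
Qed.

Lemma nth_kstep (s : seq (R * R)) uu j : nth (0,0) (kstep xc s uu) j =
  match largest xc s with
  | None => nth (0,0) s j
  | Some i => let I := nth (0,0) s i in let c := I.1 + uu * (I.2 - I.1) in
     if (j < i)%N then nth (0,0) s j else if j == i then (I.1, c)
     else if j == i.+1 then (c, I.2) else nth (0,0) s j.-1
  end.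
Proof.
rewrite /kstep; case E: (largest xc s) => [i|] //.
have [isz _] := largest_spec E.
rewrite /= nth_cat size_take isz.
case: ltnP => hj; first by rewrite nth_take.
move: hj; rewrite leq_eqVlt => /orP[/eqP<-|hj].
  by rewrite subnn eqxx.
rewrite (gtn_eqF hj).
have -> : (j - i = (j - i - 1).+1)%N by lia.
rewrite /=.
case: eqP => [->|hne]; first by rewrite subSnn.
have -> : (j - i - 1 = (j - i - 2).+1)%N by lia.
rewrite /= nth_drop; congr nth; lia.
Qed.

End KstepFacts.

Section Proc.
Variables (R : realType) (d' : measure_display) (T' : measurableType d').
Variables (V : nat -> T' -> R) (xc y : R) (n : nat).

Definition cfg t w := kconfig xc (fun i => V i w) t.

Lemma largest_mfib_gen (s : T' -> seq (R * R)) :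
  (forall j, measurable_fun setT (fun w => (nth (0,0) (s w) j).1)) ->
  (forall j, measurable_fun setT (fun w => (nth (0,0) (s w) j).2)) ->
  mfib (fun w => size (s w)) -> mfib (fun w => largest xc (s w)).
Proof.
move=> m1 m2 ms.
pose F w := (fun (cur : option nat) (i : nat) =>
  if xc < ilen (nth (0,0) (s w) i) then
    match cur with
    | None => Some i
    | Some j => if ilen (nth (0,0) (s w) j) < ilen (nth (0,0) (s w) i)
                then Some i else Some j
    end
  else cur).
have mlen : forall i, measurable_fun setT (fun w => ilen (nth (0,0) (s w) i)).
  by move=> i; exact: measurable_realfun.measurable_funB (m2 i) (m1 i).
have hfold : forall l (cur : T' -> option nat), mfib cur ->
    mfib (fun w => foldl (F w) (cur w) l).
  elim=> [|a l IH] cur mc //=.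
  apply: (IH (fun w => F w (cur w) a)).
  apply: (comp_enum eo_surj (a:=cur) (g := fun o w => F w o a)) => // o.
  rewrite /F; apply: mfib_if; [exact: mset_lt (measurable_cst _) (mlen a) | | exact: mfib_cst].
  case: o => [j|]; last exact: mfib_cst.
  by apply: mfib_if; [exact: mset_lt (mlen j) (mlen a)| exact: mfib_cst|exact: mfib_cst].
have := (comp_enum (@id_surj) (a := fun w => size (s w))
  (g := fun k w => foldl (F w) None (iota 0 k)) ms
  (fun k => hfold (iota 0 k) _ (mfib_cst T' None))).
by [].
Qed.

Lemma cfg_meas t : (forall i, (i < t)%N -> measurable_fun setT (V i)) ->
  [/\ forall j, measurable_fun setT (fun w => (nth (0,0) (cfg t w) j).1),
      forall j, measurable_fun setT (fun w => (nth (0,0) (cfg t w) j).2) &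
      mfib (fun w => size (cfg t w))].
Proof.
elim: t => [|t IH] mV.
  by split => [j|j|]; rewrite /cfg /=; [exact: measurable_cst|exact: measurable_cst|exact: mfib_cst].
have [m1 m2 ms] : [/\ forall j, measurable_fun setT (fun w => (nth (0,0) (cfg t w) j).1),
      forall j, measurable_fun setT (fun w => (nth (0,0) (cfg t w) j).2) &
      mfib (fun w => size (cfg t w))].
  by apply: IH => i hi; apply: mV; lia.
have mVt : measurable_fun setT (V t) by apply: mV.
have mL := largest_mfib_gen m1 m2 ms.
have mc : forall i, measurable_fun setT (fun w => (nth (0,0) (cfg t w) i).1 +
    V t w * ((nth (0,0) (cfg t w) i).2 - (nth (0,0) (cfg t w) i).1)).
  move=> i; apply: measurable_realfun.measurable_funD => //.
  apply: measurable_realfun.measurable_funM => //.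
  exact: measurable_realfun.measurable_funB.
split.
- move=> j.
  pose G (o : option nat) : T' -> R := match o with
    | None => fun w => (nth (0,0) (cfg t w) j).1
    | Some i => if (j < i)%N then fun w => (nth (0,0) (cfg t w) j).1
        else if j == i then fun w => (nth (0,0) (cfg t w) i).1
        else if j == i.+1 then fun w => (nth (0,0) (cfg t w) i).1 +
          V t w * ((nth (0,0) (cfg t w) i).2 - (nth (0,0) (cfg t w) i).1)
        else fun w => (nth (0,0) (cfg t w) j.-1).1
    end.
  rewrite (_ : (fun w => _) = (fun w => G (largest xc (cfg t w)) w)); last first.
    apply: funext => w; rewrite /cfg /= nth_kstep -/(cfg t w) /G.
    case: (largest xc (cfg t w)) => // i /=.
    by case: ifP => _ //; case: ifP => _ //; case: ifP.
  apply: (comp_enum_R eo_surj) => // -[i|] /=; last exact: m1.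
  by case: ifP => _ //; case: ifP => _ //; case: ifP.
- move=> j.
  pose G (o : option nat) : T' -> R := match o with
    | None => fun w => (nth (0,0) (cfg t w) j).2
    | Some i => if (j < i)%N then fun w => (nth (0,0) (cfg t w) j).2
        else if j == i then fun w => (nth (0,0) (cfg t w) i).1 +
          V t w * ((nth (0,0) (cfg t w) i).2 - (nth (0,0) (cfg t w) i).1)
        else if j == i.+1 then fun w => (nth (0,0) (cfg t w) i).2
        else fun w => (nth (0,0) (cfg t w) j.-1).2
    end.
  rewrite (_ : (fun w => _) = (fun w => G (largest xc (cfg t w)) w)); last first.
    apply: funext => w; rewrite /cfg /= nth_kstep -/(cfg t w) /G.
    case: (largest xc (cfg t w)) => // i /=.
    by case: ifP => _ //; case: ifP => _ //; case: ifP.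
  apply: (comp_enum_R eo_surj) => // -[i|] /=; last exact: m2.
  by case: ifP => _ //; case: ifP => _ //; case: ifP.
- pose G := (fun (o : option nat) w => if o is Some _ then (size (cfg t w)).+1 else size (cfg t w)).
  rewrite (_ : (fun w => _) = (fun w => G (largest xc (cfg t w)) w)); last first.
    by apply: funext => w; rewrite /cfg /= size_kstep.
  apply: (comp_enum eo_surj (a := fun w => largest xc (cfg t w)) (g := G)) => // -[i|] //.
  exact: (comp_enum (@id_surj) (a := fun w => size (cfg t w)) (g := fun k _ => k.+1) ms (fun k => mfib_cst T' k.+1)).
Qed.


Lemma splits_mfib t : (forall i, (i < t)%N -> measurable_fun setT (V i)) ->
  mfib (fun w => splits_y xc y (cfg t w)).
Proof.
move=> mV; have [m1 m2 ms] := cfg_meas mV.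
have mL := largest_mfib_gen m1 m2 ms.
pose G (o : option nat) (w : T') := match o with None => false
  | Some i => ((nth (0,0) (cfg t w) i).1 < y) && (y < (nth (0,0) (cfg t w) i).2) end.
apply: (comp_enum eo_surj (a := fun w => largest xc (cfg t w)) (g := G)) => // -[i|].
  by apply: mfib_bool; apply: mset_and; [exact: mset_lt (m1 i) (measurable_cst _)|exact: mset_lt (measurable_cst _) (m2 i)].
exact: mfib_cst.
Qed.

Definition Kw t w := Ky xc y (fun i => V i w) t.

Lemma Ky_mfib t : (forall i, (i < t)%N -> measurable_fun setT (V i)) -> mfib (Kw t).
Proof.
elim: t => [|t IH] mV.
  by rewrite /Kw /Ky; under eq_fun do rewrite big_ord0; exact: mfib_cst.
have mV' : forall i, (i < t)%N -> measurable_fun setT (V i) by move=> i hi; apply: mV; lia.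
have ms := splits_mfib mV'.
pose G (k : nat) (w : T') := if splits_y xc y (cfg t w) then k.+1 else k.
rewrite (_ : Kw t.+1 = fun w => G (Kw t w) w); last first.
  apply: funext => w; rewrite /Kw Ky_S /G -/(cfg t w).
  by case: (splits_y _ _ _) => /=; rewrite ?addn1 ?addn0.
apply: (comp_enum (@id_surj) (a := Kw t) (g := G)) => [|k]; first exact: IH.
by apply: mfib_if; [exact: mfib_set|exact: mfib_cst|exact: mfib_cst].
Qed.

Definition SFw t w := SF xc y n (fun i => V i w) t.

Lemma succ_meas t : measurable_fun setT (V t) -> measurable [set w | succb (V t w)].
Proof.
move=> mV; apply: mset_and; [exact: mset_le (measurable_cst _) mV|exact: mset_le mV (measurable_cst _)].
Qed.

Lemma SF_mfib t : (forall i, (i < t)%N -> measurable_fun setT (V i)) -> mfib (SFw t).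
Proof.
elim: t => [|t IH] mV; first exact: mfib_cst.
have mV' : forall i, (i < t)%N -> measurable_fun setT (V i) by move=> i hi; apply: mV; lia.
have ms := splits_mfib mV'.
pose G (p : nat * nat) (w : T') := if splits_y xc y (cfg t w) && (p.1 + p.2 < n)%N then
   (if succb (V t w) then (p.1.+1, p.2) else (p.1, p.2.+1)) else p.
rewrite (_ : SFw t.+1 = fun w => G (SFw t w) w) //.
apply: (comp_enum ep_surj (a := SFw t) (g := G)) => [|p]; first exact: IH.
apply: mfib_if; [|apply: mfib_if|]; try exact: mfib_cst.
  by apply: mset_and; [exact: mfib_set|exact: mfib_set (mfib_cst _ _)].
by apply: succ_meas; apply: mV.
Qed.

Definition rho : R := 7/8.
Definition hh (p : nat * nat) : R := beta R ^+ p.1 * rho ^+ (n - (p.1 + p.2)).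
Definition Hw t w := hh (SFw t w).
Definition Aw t w := splits_y xc y (cfg t w) && ((SFw t w).1 + (SFw t w).2 < n)%N.
Definition Z1 t w := if Aw t w then Hw t w else 0.
Definition Z0 t w := if Aw t w then 0 else Hw t w.

Section AtT.
Variable t : nat.
Hypothesis mV : forall i, (i < t)%N -> measurable_fun setT (V i).

Lemma Aw_meas : measurable [set w | Aw t w].
Proof.
apply: mset_and; first exact: mfib_set (splits_mfib mV).
apply: mfib_set; exact: (comp_enum ep_surj (a := SFw t) (g := fun p _ => (p.1 + p.2 < n)%N) (SF_mfib mV) (fun p => mfib_cst T' _)).
Qed.

Lemma Hw_mfib : mfib (Hw t).
Proof. exact: (comp_enum ep_surj (a := SFw t) (g := fun p _ => hh p) (SF_mfib mV) (fun p => mfib_cst T' _)). Qed.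

Lemma Hw_meas : measurable_fun setT (Hw t).
Proof. exact: (comp_enum_R ep_surj (a := SFw t) (g := fun p _ => hh p) (SF_mfib mV) (fun p => measurable_cst _)). Qed.

Lemma Z1_mfib : mfib (Z1 t).
Proof. apply: mfib_if; [exact: Aw_meas|exact: Hw_mfib|exact: mfib_cst]. Qed.
Lemma Z0_mfib : mfib (Z0 t).
Proof. apply: mfib_if; [exact: Aw_meas|exact: mfib_cst|exact: Hw_mfib]. Qed.
Lemma Z1_meas : measurable_fun setT (Z1 t).
Proof. apply: mfun_if; [exact: Aw_meas|exact: Hw_meas|exact: measurable_cst]. Qed.
Lemma Z0_meas : measurable_fun setT (Z0 t).
Proof. apply: mfun_if; [exact: Aw_meas|exact: measurable_cst|exact: Hw_meas]. Qed.

End AtT.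

End Proc.

Lemma bigsetI_mem {T : Type} {I : eqType} (s : seq I) (F : I -> set T) w :
  (\big[setI/setT]_(i <- s) F i) w <-> (forall i, i \in s -> F i w).
Proof.
elim: s => [|a s IH]; first by rewrite big_nil; split.
rewrite big_cons; split.
  by move=> [h1 /IH h2] i; rewrite inE => /orP[/eqP->|hi]; [exact: h1|exact: h2].
by move=> h; split; [apply: h; rewrite inE eqxx|apply/IH => i hi; apply: h; rewrite inE hi orbT].
Qed.

Section Indep.
Variables (R : realType) (d : measure_display) (T : measurableType d).
Variables (P : probability T R) (U : nat -> T -> R).
Hypothesis mU : forall i, measurable_fun setT (U i).
Hypothesis indU : mutually_independent P U.

Definition Gt (t : nat) : set (set T) := [set E | exists B : nat -> set R,
  (forall i, measurable (B i)) /\ E = \big[setI/setT]_(i <- iota 0 t) (U i @^-1` B i)].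

Lemma pre_meas i (B : set R) : measurable B -> measurable (U i @^-1` B).
Proof. by move=> mB; have := mU i measurableT mB; rewrite setTI. Qed.

Lemma bigsetI_meas (s : seq nat) (B : nat -> set R) : (forall i, measurable (B i)) ->
  measurable (\big[setI/setT]_(i <- s) (U i @^-1` B i)).
Proof.
move=> mB; elim: s => [|a s IH]; first by rewrite big_nil.
by rewrite big_cons; apply: measurableI => //; exact: pre_meas.
Qed.

Lemma Gt_meas t E : Gt t E -> measurable E.
Proof. by case=> B [mB ->]; exact: bigsetI_meas. Qed.

Lemma Gt_setI t : setI_closed (Gt t).
Proof.
move=> A B [B1 [m1 ->]] [B2 [m2 ->]].
exists (fun i => B1 i `&` B2 i); split; first by move=> i; apply: measurableI.
apply/seteqP; split => w.
  move=> [/bigsetI_mem h1 /bigsetI_mem h2]; apply/bigsetI_mem => i hi.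
  by split; [exact: h1|exact: h2].
by move=> /bigsetI_mem h; split; apply/bigsetI_mem => i hi; case: (h i hi).
Qed.

Lemma PfinE {A : set T} : measurable A -> P A = (fine (P A))%:E.
Proof. by move=> mA; rewrite fineK //; exact: fin_num_measure. Qed.

Lemma Plty (A : set T) : measurable A -> (P A < +oo)%E.
Proof. by move=> mA; apply: (le_lt_trans (probability_le1 P mA)); rewrite ltry. Qed.

Lemma indep_gen t (B : set R) : measurable B -> forall E, <<s Gt t >> E ->
  P (E `&` U t @^-1` B) = (P E * P (U t @^-1` B))%E.
Proof.
move=> mB; set W := U t @^-1` B.
have mW : measurable W by exact: pre_meas.
pose H := [set E | measurable E /\ P (E `&` W) = (P E * P W)%E].
suff : <<s Gt t >> `<=` H by move=> h E /h [].
apply: lambda_system_subset => //.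
- exact: Gt_setI.
- split => //.
  + by split => //; rewrite setTI probability_setT mul1e.
  + move=> X Y YX [mX hX] [mY hY]; split; first exact: measurableD.
    have -> : (X `\` Y) `&` W = (X `&` W) `\` (Y `&` W).
      apply/seteqP; split => w /=; first by move=> [[xw nyw] ww]; split => // -[].
      by move=> [[xw ww] h]; split => //; split => // yw; apply: h.
    rewrite measureD //; [|exact: measurableI|exact: measurableI|]; last by apply: Plty; exact: measurableI.
    rewrite (_ : X `&` W `&` (Y `&` W) = Y `&` W); last first.
      by apply/seteqP; split => w //=; [case=> -[]|move=> [yw ww]; split; [split; [exact: YX|]|]].
    rewrite measureD //; last exact: Plty.
    rewrite (setIidr YX) -[LHS]/(P (X `&` W) - P (Y `&` W))%E hX hY muleBl //; first exact: fin_num_measure.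
    by apply: fin_num_adde_defr; exact: fin_num_measure.
  + move=> F ndF hF.
    have mF : forall i, measurable (F i) by move=> i; case: (hF i).
    split; first exact: bigcupT_measurable.
    have c1 : (fun i => P (F i `&` W)) @ \oo --> P ((\bigcup_i F i) `&` W).
      rewrite setI_bigcupl; apply: nondecreasing_cvg_mu.
      * by move=> i; apply: measurableI.
      * by apply: bigcupT_measurable => i; apply: measurableI.
      * by move=> a b ab; apply/subsetPset; apply: setSI; apply/subsetPset; exact: ndF.
    have c2 : (fun i => P (F i) * P W)%E @ \oo --> (P (\bigcup_i F i) * P W)%E.
      apply: cvgeM; last exact: cvg_cst.
        by rewrite (PfinE (bigcupT_measurable _ mF)) (PfinE mW).
      by apply: nondecreasing_cvg_mu => //; exact: bigcupT_measurable.
    have e : (fun i => P (F i `&` W)) = (fun i => P (F i) * P W)%E.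
      by apply: funext => i; case: (hF i).
    rewrite e in c1.
    by rewrite -(cvg_lim _ c1) // -(cvg_lim _ c2).
- move=> E [BB [mBB ->]]; split; first exact: bigsetI_meas.
  pose B' := fun i => if i == t then B else BB i.
  have mB' : forall i, measurable (B' i) by move=> i; rewrite /B'; case: eqP.
  have e1 : \big[setI/setT]_(i <- iota 0 t) (U i @^-1` BB i) `&` W =
            \big[setI/setT]_(i <- iota 0 t.+1) (U i @^-1` B' i).
    rewrite -addn1 iotaD big_cat big_seq1 /= /B' eqxx; congr (_ `&` _).
    rewrite big_seq_cond [RHS]big_seq_cond; apply: eq_bigr => i.
    by rewrite andbT mem_iota => /andP[_ hi]; rewrite (ltn_eqF hi).
  rewrite e1 indU; last 2 first.
    - exact: iota_uniq.
    - by move=> i _; exact: mB'.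
  rewrite indU; last 2 first.
    - exact: iota_uniq.
    - by move=> i _; exact: mBB.
  rewrite -addn1 iotaD big_cat big_seq1 /= /B' eqxx; congr (_ * _)%E.
  rewrite big_seq_cond [RHS]big_seq_cond; apply: eq_bigr => i.
  by rewrite andbT mem_iota => /andP[_ hi]; rewrite (ltn_eqF hi).
Qed.

End Indep.

Section Integ.
Variables (R : realType) (d : measure_display) (T : measurableType d).
Variables (P : probability T R) (U : nat -> T -> R).
Hypothesis mU : forall i, measurable_fun setT (U i).
Hypothesis indU : mutually_independent P U.

Lemma int_fin_gen (Z : T -> R) (vs : seq R) (A : set T) : measurable A ->
  (forall w, Z w \in vs) -> (forall v, measurable (Z @^-1` [set v])) ->
  (\int[P]_w (Num.max (Z w) 0 * \1_A w)%:E =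
   \sum_(v <- undup vs) ((Num.max v 0)%:E * P (Z @^-1` [set v] `&` A)))%E.
Proof.
move=> mA hZ mZ.
have pt : forall w, (Num.max (Z w) 0 * \1_A w)%:E =
   (\sum_(v <- undup vs) (Num.max v 0 * \1_(Z @^-1` [set v] `&` A) w)%:E)%E.
  move=> w; rewrite (bigD1_seq (Z w)) /=; last exact: undup_uniq; last by rewrite mem_undup.
  rewrite big1_seq ?adde0.
    rewrite !indicE (_ : (w \in Z @^-1` [set Z w] `&` A) = (w \in A)) //.
    case: (boolP (w \in A)) => wA.
      by apply: mem_set; split => //; exact: set_mem.
    by apply: memNset => -[_ h]; move/negP: wA; apply; exact: mem_set.
  move=> v /andP[hv _]; rewrite indicE memNset ?mulr0 //.
  by move=> [/= h _]; move: hv; rewrite h eqxx.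
rewrite (eq_integral (fun w => (\sum_(v <- undup vs) (Num.max v 0 * \1_(Z @^-1` [set v] `&` A) w)%:E)%E)); last by move=> w _; exact: pt.
rewrite ge0_integral_sum //; last first.
  - by move=> v w _; rewrite lee_fin mulr_ge0 // ?le_max ?lexx ?orbT // indicE.
  - move=> v; apply/measurable_realfun.measurable_EFinP.
    apply: measurable_realfun.measurable_funM; first exact: measurable_cst.
    by apply: measurable_realfun.measurable_indic; apply: measurableI.
apply: eq_bigr => v _.
under eq_integral do rewrite EFinM.
rewrite ge0_integralZl //=.
all: try by rewrite integral_indic ?setIT //; apply: measurableI.
all: try by rewrite lee_fin le_max lexx orbT.
all: try by move=> w _; rewrite lee_fin indicE.
apply/measurable_realfun.measurable_EFinP.
by apply: measurable_realfun.measurable_indic; apply: measurableI.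
Qed.

Lemma sGt_meas t E : <<s Gt U t >> E -> measurable E.
Proof.
by apply: smallest_sub; [exact: sigma_algebra_measurable|move=> A; exact: Gt_meas].
Qed.

Lemma key t (Z : T -> R) (vs : seq R) (B : set R) : measurable B ->
  (forall w, Z w \in vs) -> (forall w, 0 <= Z w) ->
  (forall v, <<s Gt U t >> (Z @^-1` [set v])) ->
  (\int[P]_w (Z w * \1_(U t @^-1` B) w)%:E =
   \int[P]_w (Z w)%:E * P (U t @^-1` B))%E.
Proof.
move=> mB hZ Z0 sZ.
have mZ : forall v, measurable (Z @^-1` [set v]) by move=> v; exact: sGt_meas (sZ v).
have mW : measurable (U t @^-1` B) by exact: pre_meas.
rewrite (eq_integral (fun w => (Num.max (Z w) 0 * \1_(U t @^-1` B) w)%:E)); last first.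
  by move=> w _; rewrite max_l.
rewrite (int_fin_gen mW hZ mZ).
rewrite (eq_integral (fun w => (Num.max (Z w) 0 * \1_setT w)%:E)); last first.
  by move=> w _; rewrite max_l // indicE mem_set // mulr1.
rewrite (int_fin_gen measurableT hZ mZ) ge0_sume_distrl; last first.
  by move=> v _; rewrite mule_ge0 // lee_fin le_max lexx orbT.
apply: eq_bigr => v _; rewrite setIT (indep_gen mU indU mB (sZ v)) muleA //.
Qed.

Lemma unif_itv (X : T -> R) (a b : R) : uniform01 P X -> 0 <= a -> a < b -> b <= 1 ->
  P (X @^-1` `[a, b]%classic) = (b - a)%:E.
Proof.
move=> hX a0 ab b1; rewrite hX; last exact: measurable_itv.
rewrite /uniform_prob integral_uniform_pdf setIidl; last first.
  by move=> x /=; rewrite !in_itv /= => /andP[h1 h2]; apply/andP; split; lra.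
rewrite (eq_integral (cst 1%:E)); last first.
  move=> x; rewrite inE /= in_itv /= => /andP[h1 h2].
  rewrite /uniform_pdf ifT ?subr0 ?invr1 //; apply/andP; split; lra.
rewrite integral_cst /=; last exact: measurable_itv.
by rewrite mul1e lebesgue_measure_itv /= lte_fin ab -EFinD.
Qed.

End Integ.

Section Final.
Variables (R : realType) (d : measure_display) (T : measurableType d).
Variables (P : probability T R) (U : nat -> T -> R).
Hypothesis mU : forall i, measurable_fun setT (U i).
Hypothesis unifU : forall i, uniform01 P (U i).
Hypothesis indU : mutually_independent P U.
Variables (xc y : R) (n : nat).

Lemma mU_gt t i : (i < t)%N ->
  @measurable_fun _ _ (g_sigma_algebraType (Gt U t)) R setT (U i).
Proof.
move=> hi; rewrite /measurable_fun => _ B mB; rewrite setTI.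
apply: sub_sigma_algebra.
exists (fun j => if j == i then B else setT); split; first by move=> j; case: eqP.
apply/seteqP; split => w.
  by move=> hw; apply/bigsetI_mem => j hj; case: eqP => [->|].
move/bigsetI_mem => h; have := h i; rewrite mem_iota /= hi eqxx; exact.
Qed.

Lemma mU_lt t i : (i < t)%N -> measurable_fun setT (U i).
Proof. by move=> _; exact: mU. Qed.

Definition vsH := [seq hh R n (s, f) | s <- iota 0 n.+1, f <- iota 0 n.+1].

Lemma hh_ge0 p : 0 <= hh R n p.
Proof. by rewrite /hh mulr_ge0 // exprn_ge0 // /beta /rho. Qed.

Lemma Hw_in t w : Hw U xc y n t w \in vsH.
Proof.
rewrite /Hw /SFw; have := SF_sum xc y n (fun i => U i w) t.
case: (SF _ _ _ _ _) => s f /= h.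
have hm : (minn (Ky xc y (fun i => U i w) t) n <= n)%N by exact: geq_minr.
apply/allpairsP; exists (s, f); split; [| |by []]; rewrite mem_iota add0n leq0n /= ltnS; rewrite -h in hm; lia.
Qed.

Lemma H_rec t w : Hw U xc y n t.+1 w = Z0 U xc y n t w + Z1 U xc y n t w *
  (if succb (U t w) then beta R / rho R else (rho R)^-1).
Proof.
rewrite /Z0 /Z1 /Aw /Hw /SFw /= /cfg.
case: (SF _ _ _ _ t) => s f /=.
case: ifP => hA; last by rewrite mul0r addr0.
move/andP: hA => [_ hsf].
have [m hm] : exists m, (n - (s + f) = m.+1)%N by exists (n - (s + f)).-1; lia.
rewrite add0r /hh /= hm.
case: ifP => _ /=.
  have -> : (n - (s.+1 + f) = m)%N by lia.
  by rewrite exprS exprS /beta /rho; field.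
have -> : (n - (s + f.+1) = m)%N by lia.
by rewrite exprS /rho; field.
Qed.

Lemma Z_in0 t w : Z1 U xc y n t w \in 0 :: vsH /\ Z0 U xc y n t w \in 0 :: vsH.
Proof.
rewrite /Z1 /Z0; case: ifP => _; split; rewrite inE ?eqxx //; apply/orP; right; exact: Hw_in.
Qed.

Lemma Z_ge0 t w : 0 <= Z1 U xc y n t w /\ 0 <= Z0 U xc y n t w.
Proof. by rewrite /Z1 /Z0 /Hw; case: ifP => _; rewrite ?lexx hh_ge0. Qed.

Lemma EH_step t : (\int[P]_w (Hw U xc y n t.+1 w)%:E = \int[P]_w (Hw U xc y n t w)%:E)%E.
Proof.
set B := `[(4:R)^-1, 3/4]%classic.
have mB : measurable B by exact: measurable_itv.
have mBc : measurable (~` B) by exact: measurableC.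
set Ws := U t @^-1` B; set Wf := U t @^-1` (~` B).
have mWs : measurable Ws by exact: pre_meas.
have mWf : measurable Wf by exact: pre_meas.
have PWs : P Ws = (2^-1)%:E.
  rewrite /Ws /B unif_itv //; [congr EFin; lra|lra|lra].
have PWf : P Wf = (2^-1)%:E.
  rewrite /Wf -preimage_setC probability_setC // PWs -EFinB; congr EFin; lra.
have mZ1 := Z1_meas xc y n (fun i (_ : (i < t)%N) => mU i).
have mZ0 := Z0_meas xc y n (fun i (_ : (i < t)%N) => mU i).
have fZ1 : forall v, <<s Gt U t >> (Z1 U xc y n t @^-1` [set v]).
  exact: (Z1_mfib (T' := g_sigma_algebraType (Gt U t)) (V := U) xc y n (@mU_gt t)).
have Z1in : forall w, Z1 U xc y n t w \in 0 :: vsH by move=> w; case: (Z_in0 t w).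
have Z1ge : forall w, 0 <= Z1 U xc y n t w by move=> w; case: (Z_ge0 t w).
have Z0ge : forall w, 0 <= Z0 U xc y n t w by move=> w; case: (Z_ge0 t w).
have kS := key mU indU mB Z1in Z1ge fZ1.
have kF := key mU indU mBc Z1in Z1ge fZ1.
rewrite -/Ws in kS; rewrite -/Wf in kF.
have pt : forall w, (Hw U xc y n t.+1 w)%:E = ((Z0 U xc y n t w)%:E +
   ((beta R / rho R)%:E * (Z1 U xc y n t w * \1_Ws w)%:E +
    ((rho R)^-1)%:E * (Z1 U xc y n t w * \1_Wf w)%:E))%E.
  move=> w; rewrite H_rec -!EFinM -!EFinD; congr EFin.
  have hWs : (w \in Ws) = succb (U t w).
    apply/idP/idP => [/set_mem|h]; first by rewrite /Ws /B /= in_itv.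
    by apply: mem_set; rewrite /Ws /B /= in_itv.
  have hWf : (w \in Wf) = ~~ succb (U t w).
    apply/idP/idP => [/set_mem|h].
      by rewrite /Wf /B /= in_itv /= => /negP.
    by apply: mem_set; rewrite /Wf /B /= in_itv /=; apply/negP.
  rewrite !indicE hWs hWf; case: (succb _) => /=; rewrite /=; ring.
have mE := fun (f : T -> R) (mf : measurable_fun setT f) =>
  proj2 (measurable_realfun.measurable_EFinP setT f) mf.
have mZW := fun (W : set T) (mW : measurable W) => mE _
  (measurable_realfun.measurable_funM mZ1 (measurable_realfun.measurable_indic (D := setT) (R := R) mW)).
have geZW : forall W w, (0 <= (Z1 U xc y n t w * \1_W w)%:E)%E.
  by move=> W w; rewrite lee_fin mulr_ge0 // indicE.
have cb0 : (0 <= (beta R / rho R)%:E)%E by rewrite lee_fin /beta /rho; lra.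
have cr0 : (0 <= ((rho R)^-1)%:E)%E by rewrite lee_fin /rho; lra.
under eq_integral => w _ do rewrite pt.
rewrite ge0_integralD //; last first.
- apply: emeasurable_funD; apply: measurable_funeM; exact: mZW.
- by move=> w _; rewrite adde_ge0 // mule_ge0.
- exact: mE.
- by move=> w _; rewrite lee_fin.
rewrite ge0_integralD //; last first.
- apply: measurable_funeM; exact: mZW.
- by move=> w _; rewrite mule_ge0.
- apply: measurable_funeM; exact: mZW.
- by move=> w _; rewrite mule_ge0.
rewrite !ge0_integralZl //; try exact: mZW.
rewrite kS kF PWs PWf.
rewrite [RHS](eq_integral (fun w => (Z0 U xc y n t w)%:E + (Z1 U xc y n t w)%:E)%E); last first.
  by move=> w _; rewrite /Hw /Z0 /Z1 -EFinD; case: ifP => _; rewrite ?add0r ?addr0.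
rewrite ge0_integralD //; [|by move=> w _; rewrite lee_fin|exact: mE|by move=> w _; rewrite lee_fin|exact: mE].
congr (_ + _)%E.
set e := (\int[P]_w (Z1 U xc y n t w)%:E)%E.
have e0 : (0 <= e)%E by apply: integral_ge0 => w _; rewrite lee_fin.
rewrite muleCA [X in (_ + X)%E]muleCA -ge0_muleDr; first last.
- by rewrite mule_ge0 // lee_fin; lra.
- by rewrite mule_ge0 // lee_fin; lra.
rewrite -!EFinM -EFinD (_ : _ + _ = 1); first by rewrite mule1.
by rewrite /beta /rho; field.
Qed.

Lemma EH_all N : (\int[P]_w (Hw U xc y n N w)%:E = (rho R ^+ n)%:E)%E.
Proof.
elim: N => [|N IH]; last by rewrite EH_step.
rewrite (eq_integral (cst (rho R ^+ n)%:E)); last first.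
  by move=> w _; rewrite /Hw /hh /= expr0 mul1r subn0.
rewrite integral_cst //; transitivity ((rho R ^+ n)%:E * 1)%E; last by rewrite mule1.
by congr (_ * _)%E; exact: probability_setT.
Qed.

Lemma Hw_measT N : measurable_fun setT (Hw U xc y n N).
Proof. exact: (Hw_meas xc y n (fun i (_ : (i < N)%N) => mU i)). Qed.

Lemma markov_H (N : nat) : (0 < xc)%R ->
  (P [set w | (xc < Hw U xc y n N w)%R] <= (rho R ^+ n / xc)%:E)%E.
Proof.
move=> xc0.
set A := [set w | xc < Hw U xc y n N w].
have mA : measurable A by apply: mset_lt; [exact: measurable_cst|exact: Hw_measT].
have h : (xc%:E * P A <= (rho R ^+ n)%:E)%E.
  have hi : (\int[P]_w (\1_A w)%:E = P A)%E by rewrite integral_indic // setIT.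
  rewrite -(EH_all N) -hi.
  rewrite -ge0_integralZl //.
  all: try by rewrite lee_fin ltW.
  all: try by move=> w _; rewrite lee_fin indicE.
  all: try by apply/measurable_realfun.measurable_EFinP; exact: measurable_realfun.measurable_indic.
  apply: ge0_le_integral => //.
  all: try by move=> w _; apply: mule_ge0; rewrite lee_fin ?indicE // ltW.
  all: try by apply: measurable_funeM; apply/measurable_realfun.measurable_EFinP; exact: measurable_realfun.measurable_indic.
  all: try by move=> w _; rewrite lee_fin /Hw hh_ge0.
  all: try by apply/measurable_realfun.measurable_EFinP; exact: Hw_measT.
  move=> w _; rewrite -EFinM lee_fin indicE.
  case: (boolP (w \in A)) => wA.
    by rewrite mulr1; apply: ltW; exact: set_mem wA.
  by rewrite mulr0 /Hw hh_ge0.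
move: h; rewrite (PfinE P mA) -EFinM !lee_fin => h.
by rewrite ler_pdivlMr // mulrC.
Qed.

Lemma bad_bound (N : nat) : (0 < xc)%R ->
  (P [set w | (n < Ky xc y (fun i => U i w) N)%N] <= (rho R ^+ n / xc)%:E)%E.
Proof.
move=> xc0.
set Bd := [set w | (n < Ky xc y (fun i => U i w) N)%N].
set good := \big[setI/setT]_(i <- iota 0 N) (U i @^-1` `[0, 1]%classic).
have mgood : measurable good by apply: bigsetI_meas => // i; exact: measurable_itv.
have mBd : measurable Bd.
  have := Ky_mfib xc y (fun i (_ : (i < N)%N) => mU i).
  move=> hK; rewrite (_ : Bd = \bigcup_(k in [set k | (n < k)%N]) (Kw U xc y N @^-1` [set k])).
    by apply: bigcup_measurable => k _; exact: hK.
  by apply/seteqP; split => w /=; [move=> h; exists (Kw U xc y N w)|case=> k /= h e; move: h; rewrite -e].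

have Pgood : P good = 1%E.
  rewrite /good indU; last 2 first.
  - exact: iota_uniq.
  - by move=> i _; exact: measurable_itv.
  by rewrite big1 // => i _; rewrite unif_itv // subr0.
have Pngood : P (~` good) = 0%E by rewrite probability_setC // Pgood subee.
rewrite (measureDI P mBd mgood).
have h1 : (P (Bd `\` good) <= 0)%E.
  rewrite -Pngood; apply: le_measure; rewrite ?inE; [exact: measurableD|exact: measurableC|].
  by move=> w [].
have h2 : (P (Bd `&` good) <= P [set w | (xc < Hw U xc y n N w)%R])%E.
  apply: le_measure; rewrite ?inE; [exact: measurableI| |].
    by apply: mset_lt; [exact: measurable_cst|exact: Hw_measT].
  move=> w [/= hb /bigsetI_mem hg].
  have hu : forall i, (i < N)%N -> 0 <= U i w <= 1.
    move=> i hi; have := hg i; rewrite mem_iota /= hi => /(_ isT).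
    by rewrite /= in_itv.
  have [hs hx] := bad_det xc0 hu hb.
  by rewrite /Hw /SFw /hh hs subnn expr0 mulr1.
apply: le_trans (leeD h1 (le_trans h2 (markov_H N xc0))) _.
by rewrite add0e.
Qed.

End Final.

Lemma num_bound (R : realType) (A xc : R) (n : nat) : 0 < A -> 0 < xc < 1 ->
  (A + 1) / ln (8/7 : R) * ln (1 / xc) < n.+1%:R ->
  rho R ^+ n / xc <= 8/7 * xc `^ A.
Proof.
move=> A0 /andP[xc0 xc1] hn.
set L := ln (8/7 : R); set l := ln (1 / xc).
have L0 : 0 < L by apply: ln_gt0; lra.
have l0 : 0 < l by apply: ln_gt0; rewrite ltr_pdivlMr //; lra.
have e87 : expR L = 8/7 by rewrite /L lnK // posrE; lra.
have exc : expR l = xc^-1 by rewrite /l lnK ?div1r // posrE invr_gt0.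
have lnxc : ln xc = - l by rewrite /l div1r lnV ?opprK // posrE.
have erho : rho R = expR (- L) by rewrite expRN e87 /rho; field.
rewrite erho -expRM_natl -exc -expRD.
rewrite /powR (gt_eqF xc0) lnxc -e87 -expRD ler_expR.
have : (A + 1) * l < n.+1%:R * L.
  by move: hn; rewrite mulrAC ltr_pdivrMr.
rewrite -natr1 => h; nra.
Qed.

Theorem lemma1 (R : realType) (d : measure_display) (T : measurableType d)
  (P : probability T R) (U : nat -> T -> R)
  (mU : forall i, measurable_fun setT (U i))
  (unifU : forall i, uniform01 P (U i))
  (indU : mutually_independent P U)
  (y : R) (hy : 0 < y < 1) :
  forall A : R, 0 < A ->
  exists C D : R, 0 < C /\ 0 < D /\
    forall xc : R, 0 < xc < 1 ->
      forall N : nat,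
        (P [set w | (C * ln (1 / xc) < (Ky xc y (fun i => U i w) N)%:R)%R]
        <= (D * xc `^ A)%:E)%E.
Proof.
move=> A A0.
have L0 : 0 < ln (8/7 : R) by apply: ln_gt0; lra.
exists ((A + 1) / ln (8/7 : R)), (8/7); split; [|split].
- by apply: divr_gt0 => //; lra.
- lra.
move=> xc hxc N.
have [xc0 xc1] := andP hxc.
have C0 : 0 < (A + 1) / ln (8/7 : R) by apply: divr_gt0 => //; lra.
have l0 : 0 < ln (1 / xc) by apply: ln_gt0; rewrite ltr_pdivlMr //; lra.
have Cl0 : 0 <= (A + 1) / ln (8/7 : R) * ln (1 / xc) by apply: mulr_ge0; apply: ltW.
set n := Num.truncn ((A + 1) / ln (8/7 : R) * ln (1 / xc)).
rewrite (_ : [set w | _] = [set w | (n < Ky xc y (fun i => U i w) N)%N]); last first.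
  by apply/seteqP; split => w /=; rewrite truncn_lt_nat.
apply: le_trans (bad_bound mU unifU indU y n N xc0) _.
by rewrite lee_fin; apply: num_bound => //; exact: truncnS_gt.
Qed.
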